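(* Let $\mathcal{X},\mathcal{A}$ be finite sets, and consider a stationary MFG $(\mathcal{X},\mathcal{A},p,r,\gamma)$ with $\gamma\in[0,1)$. For $\mu\in\Delta_{\mathcal{X}}$ and $\pi\in\Pi$, let $$J_\gamma(\pi;\mu)=\mathbb{E}\Big[\sum_{n\ge 0}\gamma^n r(x_n,a_n,\mu)\Big],\quad x_0\sim\mu,\ a_n\sim\pi(\cdot\mid x_n),\ x_{n+1}\sim p(\cdot\mid x_n,a_n,\mu),$$ and $\mathbf{BR}(\mu)=\operatorname{argmax}_{\pi\in\Pi}J_\gamma(\pi;\mu)$. Assume that (1) for every $\mu\in\Delta_{\mathcal{X}}$, $\mathbf{BR}(\mu)$ consists of a single policy $\pi^*_\mu$, and (2) the map $\Delta_{\mathcal{X}}\to\Pi$, $\mu\mapsto\pi^*_\mu$, is continuous (with $\Pi$ carrying its topology as a subset of $\mathbb{R}^{\mathcal{X}\times\mathcal{A}}$). Then this map is constant: there exists a single deterministic policy $\pi$ such that $\mathbf{BR}(\mu)=\{\pi\}$ for all $\mu\in\Delta_{\mathcal{X}}$.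
   Context: $\Delta_{\mathcal{L}}$ denotes the set of probability distributions on a finite set $\mathcal{L}$. $\Pi=(\Delta_{\mathcal{A}})^{\mathcal{X}}$ is the set of stationary policies, a policy $\pi$ mapping each state $x$ to a distribution $\pi(\cdot\mid x)\in\Delta_{\mathcal{A}}$; a policy is deterministic if each $\pi(\cdot\mid x)$ is a Dirac mass. The transition kernel is $p:\mathcal{X}\times\mathcal{A}\times\Delta_{\mathcal{X}}\to\Delta_{\mathcal{X}}$ and the reward is $r:\mathcal{X}\times\mathcal{A}\times\Delta_{\mathcal{X}}\to\mathbb{R}$; in $J_\gamma(\pi;\mu)$ the population distribution $\mu$ is held fixed. *)

(* Defs.v *)
From HB Require Import structures.
From mathcomp Require Import all_boot all_order all_algebra.
From mathcomp Require Import all_classical all_reals all_analysis.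
Set Implicit Arguments. Unset Strict Implicit. Unset Printing Implicit Defensive.
Import Order.TTheory GRing.Theory Num.Theory.
Import numFieldNormedType.Exports.
Import ArrowAsProduct.
Local Open Scope classical_set_scope.
Local Open Scope ring_scope.

Section MFG.
Variables (R : realType) (X A : finType).

Definition is_dist (T : finType) (m : T -> R) : Prop :=
  (forall t, 0 <= m t) /\ \sum_(t : T) m t = 1.

Definition Delta : set (X -> R) := [set m | is_dist m].

(* Pi = (Delta_A)^X : stationary policies, pi x a = pi(a | x) *)
Definition Policies : set (X -> A -> R) := [set pi | forall x, is_dist (pi x)].

Definition deterministic (pi : X -> A -> R) : Prop :=
  forall x, exists a : A, pi x = (fun b => if b == a then 1 else 0).

(* p x a mu y = p(y | x, a, mu),  r x a mu = r(x, a, mu) *)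
Variables (p : X -> A -> (X -> R) -> X -> R) (r : X -> A -> (X -> R) -> R).

(* law of x_n when x_0 ~ mu, a_k ~ pi(.|x_k), x_{k+1} ~ p(.|x_k,a_k,mu) *)
Fixpoint state_law (pi : X -> A -> R) (mu : X -> R) (n : nat) : X -> R :=
  match n with
  | 0 => mu
  | n'.+1 => fun y => \sum_(x : X) \sum_(a : A)
                 state_law pi mu n' x * pi x a * p x a mu y
  end.

Definition exp_reward (pi : X -> A -> R) (mu : X -> R) (n : nat) : R :=
  \sum_(x : X) \sum_(a : A) state_law pi mu n x * pi x a * r x a mu.

Definition J (gamma : R) (pi : X -> A -> R) (mu : X -> R) : R :=
  limn (fun N => \sum_(0 <= n < N) gamma ^+ n * exp_reward pi mu n).

Definition BR (gamma : R) (mu : X -> R) : set (X -> A -> R) :=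
  [set pi | Policies pi /\ forall pi', Policies pi' -> J gamma pi' mu <= J gamma pi mu].

End MFG.

(* Main.v *)
Require Import Defs.
From HB Require Import structures.
From mathcomp Require Import all_boot all_order all_algebra.
From mathcomp Require Import all_classical all_reals all_analysis.
From mathcomp Require Import ring lra.
Import Order.TTheory GRing.Theory Num.Theory.
Import numFieldNormedType.Exports.
Import ArrowAsProduct.
Local Open Scope classical_set_scope.
Local Open Scope ring_scope.

Section Step1.
Variables (R : realType) (X A : finType).
Variables (p : X -> A -> (X -> R) -> X -> R) (r : X -> A -> (X -> R) -> R).
Variables (gamma : R) (mu : X -> R).
Hypothesis hp : forall x a, is_dist (p x a mu).
Hypothesis g0 : 0 <= gamma.
Hypothesis g1 : gamma < 1.
Hypothesis hmu : is_dist mu.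

Definition Pp (pi : X -> A -> R) y z := \sum_a pi y a * p y a mu z.
Definition rp (pi : X -> A -> R) y := \sum_a pi y a * r y a mu.
Definition dot (m v : X -> R) := \sum_x m x * v x.

Lemma law_succ pi n y :
  state_law p pi mu n.+1 y = \sum_x state_law p pi mu n x * Pp pi x y.
Proof.
rewrite /=; apply: eq_bigr => x _; rewrite /Pp mulr_sumr.
by apply: eq_bigr => a _; rewrite mulrA.
Qed.

Lemma exp_rewardE pi n :
  exp_reward p r pi mu n = dot (state_law p pi mu n) (rp pi).
Proof.
rewrite /exp_reward /dot; apply: eq_bigr => x _; rewrite /rp mulr_sumr.
by apply: eq_bigr => a _; rewrite mulrA.
Qed.

Lemma Pp_dist pi : Policies pi -> forall y, is_dist (Pp pi y).
Proof.
move=> hpi y; split.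
  move=> z; apply: sumr_ge0 => a _; apply: mulr_ge0; [exact: (hpi y).1|exact: (hp y a).1].
rewrite /Pp exchange_big /= -(hpi y).2; apply: eq_bigr => a _.
by rewrite -mulr_sumr (hp y a).2 mulr1.
Qed.

Lemma law_dist pi n : Policies pi -> is_dist (state_law p pi mu n).
Proof.
move=> hpi; elim: n => [|n [IH0 IH1]] //; split.
  move=> y; rewrite law_succ; apply: sumr_ge0 => x _; apply: mulr_ge0; [exact: IH0|]. exact: (Pp_dist pi hpi x).1.
under eq_bigr do rewrite law_succ.
rewrite exchange_big /= -IH1; apply: eq_bigr => x _.
by rewrite -mulr_sumr (Pp_dist pi hpi x).2 mulr1.
Qed.

Lemma dot_succ pi n V :
  dot (state_law p pi mu n.+1) V =
  dot (state_law p pi mu n) (fun y => \sum_z Pp pi y z * V z).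
Proof.
rewrite /dot; under eq_bigr do rewrite law_succ mulr_suml.
rewrite exchange_big /=; apply: eq_bigr => x _; rewrite mulr_sumr.
by apply: eq_bigr => z _; rewrite mulrA.
Qed.

Lemma dot_lin m a b c :
  dot m (fun y => a y + gamma * b y - c y) = dot m a + gamma * dot m b - dot m c.
Proof.
rewrite /dot mulr_sumr -big_split -sumrB /=; apply: eq_bigr => y _.
by rewrite mulrBr mulrDr mulrCA.
Qed.

Definition delta pi V y := rp pi y + gamma * (\sum_z Pp pi y z * V z) - V y.

Lemma telescope pi V N :
  \sum_(0 <= n < N) gamma ^+ n * exp_reward p r pi mu n =
  dot mu V + \sum_(0 <= n < N) gamma ^+ n * dot (state_law p pi mu n) (delta pi V)
  - gamma ^+ N * dot (state_law p pi mu N) V.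
Proof.
elim: N => [|N IH]; first by rewrite !big_geq // expr0 mul1r /= addr0 subrr.
rewrite !big_nat_recr //= IH exp_rewardE dot_succ /delta dot_lin exprS.
ring.
Qed.


Lemma dist_le1 (l : X -> R) y : is_dist l -> l y <= 1.
Proof.
move=> [l0 l1]; rewrite -l1 (bigD1 y) //= lerDl.
by apply: sumr_ge0 => z _; exact: l0.
Qed.

Lemma dot_bound (l V : X -> R) : is_dist l -> `|dot l V| <= \sum_y `|V y|.
Proof.
move=> hl; rewrite /dot; apply: (le_trans (ler_norm_sum _ _ _)).
apply: ler_sum => y _; rewrite normrM (ger0_norm (hl.1 y)).
rewrite -[leRHS]mul1r; apply: ler_wpM2r; first exact: normr_ge0.
exact: dist_le1.
Qed.

Lemma geo_sum N : \sum_(0 <= n < N) gamma ^+ n <= (1 - gamma)^-1.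
Proof.
have h1 : 0 < 1 - gamma by rewrite subr_gt0.
have : (1 - gamma) * \sum_(0 <= n < N) gamma ^+ n = 1 - gamma ^+ N.
  elim: N => [|N IH]; first by rewrite big_geq // expr0 mulr0 subrr.
  by rewrite big_nat_recr //= mulrDr IH exprS; ring.
move=> h; rewrite -(ler_pM2l h1) h mulfV ?gt_eqF //.
by rewrite gerBl; exact: exprn_ge0.
Qed.

Lemma geo_vanish (w : nat -> R) (M : R) : (forall n, `|w n| <= M) ->
  (fun n => gamma ^+ n * w n) @ \oo --> 0.
Proof.
move=> hw.
have hg : `|gamma| < 1 by rewrite ger0_norm.
have c1 : (fun n => gamma ^+ n * M) @ \oo --> 0.
  have := @cvgMr_tmp _ _ _ _ _ _ M (cvg_expr hg); rewrite mul0r; exact.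
have c2 : (fun n => - (gamma ^+ n * M)) @ \oo --> 0.
  have := cvgN c1; rewrite oppr0; exact.
apply: (squeeze_cvgr _ c2 c1); near=> n.
have : `|gamma ^+ n * w n| <= gamma ^+ n * M.
  by rewrite normrM (ger0_norm (exprn_ge0 n g0)) ler_wpM2l // exprn_ge0.
by rewrite ler_norml.
Unshelve. all: by end_near.
Qed.

Lemma J_main pi V : Policies pi -> (forall y, 0 <= delta pi V y) ->
  let D := fun N => \sum_(0 <= n < N) gamma ^+ n * dot (state_law p pi mu n) (delta pi V) in
  cvgn D /\ J p r gamma pi mu = dot mu V + limn D.
Proof.
move=> hpi hd D.
have Dnd : {homo D : n m / (n <= m)%N >-> n <= m}.
  move=> n m nm; rewrite /D (big_cat_nat (leq0n n) nm) /= lerDl.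
  apply: sumr_ge0 => k _; apply: mulr_ge0; first exact: exprn_ge0.
  apply: sumr_ge0 => y _; apply: mulr_ge0; [exact: (law_dist pi k hpi).1|exact: hd].
have Dub : has_ubound (range D).
  exists ((\sum_y `|delta pi V y|) * (1 - gamma)^-1) => _ [N _ <-].
  apply: (@le_trans _ _ (\sum_(0 <= n < N) gamma ^+ n * \sum_y `|delta pi V y|)).
    apply: ler_sum => n _; apply: ler_wpM2l; first exact: exprn_ge0.
    exact: (le_trans (ler_norm _) (dot_bound _ _ (law_dist pi n hpi))).
  rewrite -mulr_suml mulrC; apply: ler_wpM2l; last exact: geo_sum.
  by apply: sumr_ge0 => y _; exact: normr_ge0.
have cD : cvgn D by exact: nondecreasing_is_cvgn.
split => //.
rewrite /J.
have -> : (fun N => \sum_(0 <= n < N) gamma ^+ n * exp_reward p r pi mu n) =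
   (fun N => dot mu V + D N - gamma ^+ N * dot (state_law p pi mu N) V).
  by apply/funext => N; rewrite (telescope pi V).
have h : (fun N => dot mu V + D N - gamma ^+ N * dot (state_law p pi mu N) V) @ \oo
    --> dot mu V + limn D - 0.
  apply: cvgB; first by apply: cvgD => //; exact: cvg_cst.
  exact: (@geo_vanish (fun N => dot (state_law p pi mu N) V) (\sum_y `|V y|)
    (fun N => dot_bound _ V (law_dist pi N hpi))).
rewrite subr0 in h.
exact: (cvg_lim (@Rhausdorff R) h).
Qed.

Lemma bellman pi : Policies pi -> exists V : X -> R, forall y, delta pi V y = 0.
Proof.
move=> hpi.
pose P (i j : 'I_#|X|) := Pp pi (enum_val i) (enum_val j).
have P0 i j : 0 <= P i j by exact: (Pp_dist pi hpi _).1.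
have toX (F : X -> R) : \sum_(j : 'I_#|X|) F (enum_val j) = \sum_z F z.
  rewrite (reindex (@enum_rank X)) /=; last by apply: onW_bij; exact: enum_rank_bij.
  by apply: eq_bigr => z _; rewrite enum_rankK.
have sumP i : \sum_j P i j = 1.
  by rewrite /P (toX (fun z => Pp pi (enum_val i) z)); exact: (Pp_dist pi hpi _).2.
pose Mx : 'M[R]_#|X| := \matrix_(i, j) ((i == j)%:R - gamma * P i j).
pose b : 'cV[R]_#|X| := \col_i rp pi (enum_val i).
have rowE (u : 'rV[R]_#|X|) j : (u *m Mx) 0 j = u 0 j - gamma * \sum_i u 0 i * P i j.
  rewrite !mxE (eq_bigr (fun i => u 0 i * (i == j)%:R - gamma * (u 0 i * P i j))); last first.
    by move=> i _; rewrite mxE mulrBr mulrCA.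
  rewrite sumrB -mulr_sumr (bigD1 j) //= eqxx mulr1 big1 ?addr0 //.
  by move=> i /negbTE ->; rewrite mulr0.
have unit : Mx \in unitmx.
  rewrite unitmxE unitfE; apply/det0P => -[u un0 hu].
  have hj j : u 0 j = gamma * \sum_i u 0 i * P i j.
    have := congr1 (fun M : 'M[R]_(1, #|X|) => M 0 j) hu; rewrite rowE mxE.
    by move/eqP; rewrite subr_eq0 => /eqP.
  have S0 : \sum_j `|u 0 j| <= gamma * \sum_j `|u 0 j|.
    apply: (@le_trans _ _ (\sum_j gamma * \sum_i `|u 0 i| * P i j)).
      apply: ler_sum => j _; rewrite hj normrM ger0_norm // ler_wpM2l //.
      apply: le_trans (ler_norm_sum _ _ _) _; apply: ler_sum => i _.
      by rewrite normrM (ger0_norm (P0 i j)).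
    rewrite -mulr_sumr ler_wpM2l // exchange_big /= le_eqVlt; apply/orP; left.
    by apply/eqP; apply: eq_bigr => i _; rewrite -mulr_sumr sumP mulr1.
  have Sge0 : 0 <= \sum_j `|u 0 j| by apply: sumr_ge0 => j _; exact: normr_ge0.
  have Sle0 : \sum_j `|u 0 j| <= 0.
    have : (1 - gamma) * \sum_j `|u 0 j| <= 0 by rewrite mulrBl mul1r subr_le0.
    by rewrite pmulr_rle0 // subr_gt0.
  apply: (negP un0); apply/eqP/matrixP => i j; rewrite (ord1 i) mxE /=.
  apply/eqP; rewrite -normr_eq0 eq_le normr_ge0 andbT; apply: le_trans Sle0.
  rewrite (bigD1 j) //= lerDl; apply: sumr_ge0 => k _; exact: normr_ge0.
pose v := invmx Mx *m b.
have hv : Mx *m v = b by rewrite /v mulmxA mulmxV // mul1mx.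
exists (fun y => v (enum_rank y) 0) => y.
have := congr1 (fun M : 'cV[R]_#|X| => M (enum_rank y) 0) hv; rewrite !mxE.
rewrite (eq_bigr (fun j => v j 0 * ((enum_rank y == j)%:R) - gamma * (P (enum_rank y) j * v j 0))); last first.
  by move=> j _; rewrite mxE mulrBl mulrA mulrC.
rewrite sumrB -mulr_sumr (bigD1 (enum_rank y)) //= eqxx mulr1 big1 ?addr0; last first.
  by move=> i; rewrite eq_sym => /negbTE ->; rewrite mulr0.
have toX' (G : 'I_#|X| -> R) : \sum_j G j = \sum_z G (enum_rank z).
  by rewrite (reindex (@enum_rank X)) //=; apply: onW_bij; exact: enum_rank_bij.
rewrite toX' /P enum_rankK.
under eq_bigr do rewrite enum_rankK.
move=> h; rewrite /delta -h.
by ring.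
Qed.

Lemma greedy pi V (a0 : A) : Policies pi -> (forall y, delta pi V y = 0) ->
  exists pi', Policies pi' /\ deterministic pi' /\ forall y, 0 <= delta pi' V y.
Proof.
move=> hpi hV.
pose Q y a := r y a mu + gamma * \sum_z p y a mu z * V z.
pose astar y := [arg max_(b > a0) Q y b]%O.
have hmax y a : Q y a <= Q y (astar y).
  by rewrite /astar; case: arg_maxP => // i _ H; exact: H.
pose pi' y b : R := if b == astar y then 1 else 0.
have e1 y (F : A -> R) : \sum_b pi' y b * F b = F (astar y).
  rewrite (bigD1 (astar y)) //= /pi' eqxx mul1r big1 ?addr0 //.
  by move=> b /negbTE ->; rewrite mul0r.
exists pi'; split; [|split].
- move=> y; split; first by move=> b; rewrite /pi'; case: ifP.
  rewrite (bigD1 (astar y)) //= /pi' eqxx big1 ?addr0 //.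
  by move=> b /negbTE ->.
- by move=> y; exists (astar y).
- move=> y.
  have VE : V y = \sum_a pi y a * Q y a.
    have := hV y; rewrite /delta => /eqP; rewrite subr_eq0 => /eqP <-.
    rewrite /rp /Q /Pp.
    under [in RHS]eq_bigr do rewrite mulrDr.
    rewrite big_split /=; congr (_ + _).
    under [in RHS]eq_bigr do rewrite mulrCA.
    rewrite -mulr_sumr; congr (gamma * _).
    under eq_bigr do rewrite mulr_suml.
    rewrite exchange_big /=; apply: eq_bigr => a _; rewrite mulr_sumr.
    by apply: eq_bigr => z _; rewrite mulrA.
  have Vle : V y <= Q y (astar y).
    rewrite VE -[leRHS]mul1r -(hpi y).2 mulr_suml.
    apply: ler_sum => a _; apply: ler_wpM2l; [exact: (hpi y).1|exact: hmax].
  rewrite /delta /rp e1 /Pp.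
  under eq_bigr do rewrite (e1 y (fun b => p y b mu _)).
  by rewrite subr_ge0.
Qed.

Lemma improve pi (a0 : A) : Policies pi ->
  exists pi', Policies pi' /\ deterministic pi' /\
    J p r gamma pi mu <= J p r gamma pi' mu.
Proof.
move=> hpi; have [V hV] := bellman pi hpi.
have [pi' [hpi' [det hd]]] := greedy pi V a0 hpi hV.
exists pi'; split => //; split => //.
have hd0 : forall y, 0 <= delta pi V y by move=> y; rewrite hV.
have [_ ->] := J_main pi V hpi hd0.
have [cD ->] := J_main pi' V hpi' hd.
rewrite lerD2l.
have -> : (fun N => \sum_(0 <= n < N) gamma ^+ n * dot (state_law p pi mu n) (delta pi V))
    = fun _ => 0.
  apply/funext => N; apply: big1 => n _; rewrite /dot big1 ?mulr0 // => y _.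
  by rewrite hV mulr0.
rewrite (lim_cst (@Rhausdorff R)); apply: limr_ge => //; near=> N.
apply: sumr_ge0 => n _; apply: mulr_ge0; first exact: exprn_ge0.
apply: sumr_ge0 => y _; apply: mulr_ge0; [exact: (law_dist pi' n hpi').1|exact: hd].
Unshelve. all: by end_near.
Qed.


End Step1.
Lemma cont_into (T : topologicalType) (U : Type) (K : topologicalType) (g : T -> U -> K) :
  (forall u, continuous (fun t => g t u)) -> continuous g.
Proof.
move=> hg t.
have := @cvg_sup (U -> K) U (fun i => Topological.class (initial_topology (fun f : U -> K => f i))) (g @ t) (g t).
move=> /(_ _) [] // _; apply => i.
have := @continuous_comp_initial (U -> K) T K (fun f : U -> K => f i) g (hg i) t.
exact.
Qed.

Lemma const_det (R : realType) (X A : finType) (f : (X -> R) -> (X -> A -> R)) :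
  {within @Delta R X, continuous f} ->
  (forall mu, Delta mu -> deterministic (f mu)) ->
  forall mu nu, Delta mu -> Delta nu -> f mu = f nu.
Proof.
move=> hcont hdet mu nu hmu hnu.
apply/funext => x; apply/funext => a.
pose seg (t : R) := fun y => mu y + t * (nu y - mu y).
have cseg : continuous seg.
  apply: cont_into => y t.
  apply: cvgD; first exact: cvg_cst.
  apply: cvgMr_tmp; exact: cvg_id.
have sub : seg @` `[0, 1] `<=` @Delta R X.
  move=> _ [t /andP [t0 t1] <-]; split.
    move=> y; rewrite /seg.
    have -> : mu y + t * (nu y - mu y) = (1 - t) * mu y + t * nu y by ring.
    apply: addr_ge0; apply: mulr_ge0 => //; [by rewrite subr_ge0|exact: hmu.1|exact: hnu.1].
  rewrite /seg big_split /= -mulr_sumr sumrB hmu.2 hnu.2 subrr mulr0 addr0 //.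
have c1 : connected (seg @` `[0, 1]).
  have h := @segment_connected R 0 1.
  exact: (connected_continuous_connected h (continuous_subspaceT cseg)).
have c2 : connected (f @` (seg @` `[0, 1])).
  exact: connected_continuous_connected c1 (continuous_subspaceW sub hcont).
have cproj : continuous (fun h : X -> A -> R => h x a).
  move=> h; apply: (@continuous_comp _ _ _ (fun h : X -> A -> R => h x) (fun g : A -> R => g a)).
    exact: proj_continuous.
  exact: proj_continuous.
have c3 := connected_continuous_connected c2 (continuous_subspaceT cproj).
move/connected_intervalP: c3 => hI.
set E := (fun h : X -> A -> R => h x a) @` (f @` (seg @` `[0, 1])) in hI.
have Emu : E (f mu x a).
  exists (f mu) => //; exists mu => //; exists 0; first by rewrite /= in_itv /= lexx ler01.
  by apply/funext => y; rewrite /seg mul0r addr0.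
have Enu : E (f nu x a).
  exists (f nu) => //; exists nu => //; exists 1; first by rewrite /= in_itv /= lexx ler01.
  by apply/funext => y; rewrite /seg mul1r addrC subrK.
have E01 z : E z -> z = 0 \/ z = 1.
  move=> [_ [_ [t ht <-] <-] <-].
  have [b hb] := hdet _ (sub _ (ex_intro2 _ _ t ht erefl)) x.
  by rewrite hb; case: (a == b); [right|left].
have h2 : (2^-1 : R) * 2 = 1 by rewrite mulVf // pnatr_eq0.
have h3a : (0 : R) <= 2^-1 by nra.
have h3b : (2^-1 : R) <= 1 by nra.
have half : ~ E (2^-1 : R).
  by move=> /E01 [] h; rewrite h in h2; lra.
case: (E01 _ Emu) => e1; case: (E01 _ Enu) => e2; rewrite e1 e2 //; exfalso; apply: half.
  by apply: (hI 0 1); [rewrite -e1|rewrite -e2|rewrite h3a h3b].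
by apply: (hI 0 1); [rewrite -e2|rewrite -e1|rewrite h3a h3b].
Qed.

Theorem mainTheorem2 (R : realType) (X A : finType)
    (p : X -> A -> (X -> R) -> X -> R) (r : X -> A -> (X -> R) -> R)
    (gamma : R) (f : (X -> R) -> (X -> A -> R)) :
  (forall x a mu, Delta mu -> is_dist (p x a mu)) ->
  0 <= gamma -> gamma < 1 ->
  (forall mu, Delta mu -> BR p r gamma mu = [set f mu]) ->
  {within @Delta R X, continuous f} ->
  exists pi : X -> A -> R,
    @Policies R X A pi /\ deterministic pi /\
    forall mu, Delta mu -> BR p r gamma mu = [set pi].
Proof.
move=> hp g0 g1 hBR hcont.
have fdet : forall mu, Delta mu -> Policies (f mu) /\ deterministic (f mu).
  move=> mu hmu.
  have : BR p r gamma mu (f mu) by rewrite hBR.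
  case=> hpol hopt; split => //.
  have hX : (0 < #|X|)%N.
    rewrite lt0n; apply/negP => /eqP /card0_eq h0.
    move: hmu.2; rewrite big_pred0 // => /eqP; by rewrite eq_sym oner_eq0.
  pose x0 := enum_val (Ordinal hX).
  have hA : (0 < #|A|)%N.
    rewrite lt0n; apply/negP => /eqP /card0_eq h0.
    move: (hpol x0).2; rewrite big_pred0 // => /eqP; by rewrite eq_sym oner_eq0.
  pose a0 := enum_val (Ordinal hA).
  have [pi' [hpi' [dpi' hJ]]] := @improve R X A p r gamma mu (fun x a => hp x a mu hmu) g0 g1 hmu (f mu) a0 hpol.
  have : BR p r gamma mu pi'.
    by split => // pi'' h; exact: le_trans (hopt pi'' h) hJ.
  by rewrite hBR // => <-.
case: (pselect (exists mu, @Delta R X mu)) => [[mu0 hmu0]|hno].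
  exists (f mu0); have [h1 h2] := fdet mu0 hmu0; split => //; split => //.
  by move=> mu hmu; rewrite hBR // (@const_det R X A f hcont (fun m hm => (fdet m hm).2) mu mu0 hmu hmu0).
have hX0 : forall x : X, False.
  move=> x; apply: hno; exists (fun y => if y == x then 1 else 0); split.
    by move=> y; case: ifP.
  by rewrite (bigD1 x) //= eqxx big1 ?addr0 // => y /negbTE ->.
exists (fun _ _ => 0); split; [|split]; [move=> x|move=> x|move=> mu hmu]; exfalso;
  [exact: hX0 x|exact: hX0 x|exact: hno (ex_intro _ mu hmu)].
Qed.
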